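(* Let $G$ be a connected graph on $n$ vertices with independence number $\beta$. Then $$ABC(G)\leq \beta(n-\beta)\sqrt{\frac{2n-\beta-3}{(n-\beta)(n-1)}}+\frac{(n-\beta)(n-\beta-1)}{2}\sqrt{\frac{2n-4}{(n-1)(n-1)}},$$ with equality if and only if $G\cong \overline{K_{\beta}}\vee K_{n-\beta}$.
   Context: For a simple graph $G$, $ABC(G)=\sum_{uv\in E(G)}\sqrt{\frac{d(u)+d(v)-2}{d(u)d(v)}}$, where $d(u)$ is the degree of $u$. The independence number is the size of a largest set of pairwise nonadjacent vertices. $\overline{K_\beta}$ is the edgeless graph on $\beta$ vertices, $K_r$ the complete graph on $r$ vertices, and $G\vee H$ (join) is the graph on $V(G)\cup V(H)$ (disjoint) with edge set $E(G)\cup E(H)\cup\{xy: x\in V(G), y\in V(H)\}$. *)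

(* Defs.v *)
From mathcomp Require Import all_boot all_order all_algebra.
From mathcomp Require Import reals.
Set Implicit Arguments. Unset Strict Implicit. Unset Printing Implicit Defensive.
Import Order.TTheory GRing.Theory Num.Theory.

Definition simple_graph (T : finType) (e : rel T) : Prop :=
  symmetric e /\ irreflexive e.

Definition connected_graph (T : finType) (e : rel T) : Prop :=
  forall x y : T, connect e x y.

Definition deg (T : finType) (e : rel T) (x : T) : nat := #|[set y | e x y]|.

Definition independent (T : finType) (e : rel T) (S : {set T}) : bool :=
  [forall x in S, forall y in S, ~~ e x y].

Definition indep_num (T : finType) (e : rel T) : nat :=
  \max_(S : {set T} | independent e S) #|S|.

Local Open Scope ring_scope.

(* ABC index: sum over edges uv; each unordered edge is counted twice in
   the ordered double sum, hence the factor 1/2. *)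
Definition ABC (R : realType) (T : finType) (e : rel T) : R :=
  2^-1 * \sum_(x : T) \sum_(y : T | e x y)
    Num.sqrt (((deg e x)%:R + (deg e y)%:R - 2) / ((deg e x)%:R * (deg e y)%:R)).

(* Adjacency of  complement(K_b) \/ K_(n-b)  on vertex set 'I_n:
   vertices i < b form the independent part, the rest a clique,
   and every vertex of one part is joined to every vertex of the other. *)
Definition join_empty_complete (n b : nat) : rel 'I_n :=
  fun i j => (i != j) && ~~ (((i : nat) < b)%N && ((j : nat) < b)%N).
Arguments join_empty_complete : clear implicits.

Definition graph_iso (T1 T2 : finType) (e1 : rel T1) (e2 : rel T2) : Prop :=
  exists f : T1 -> T2, bijective f /\ forall x y, e2 (f x) (f y) = e1 x y.

(* Main.v *)
Require Import Defs.
From mathcomp Require Import all_boot all_order all_algebra.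
From mathcomp Require Import reals.
From mathcomp Require Import ring lra.
From Stdlib Require Import FunctionalExtensionality.
Import Order.TTheory GRing.Theory Num.Theory.
Local Open Scope ring_scope.

Section An.
Variable R : realType.

Definition F (p q : R) := Num.sqrt ((p + q - 2) / (p * q)).
Definition cc (x : R) := (2 * x * Num.sqrt (x + 1))^-1.

Lemma sqrt_lt_aux (P z : R) : 0 < z -> P < z ^+ 2 -> Num.sqrt P < z.
Proof.
move=> z0 Pz; case: (leP P 0) => P0; first by rewrite ler0_sqrtr.
have := sqrtr_ge0 P; have := sqr_sqrtr (ltW P0) => h1 h2.
rewrite -h1 in Pz; move: Pz h2 z0; nra.
Qed.

Lemma loss_lt (x y : R) : 1 <= x -> 1 <= y -> F x y - F (x + 1) y < cc x.
Proof.
move=> x1 y1; rewrite /F.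
set r := Num.sqrt (x + 1).
have r0 : 0 < r by rewrite sqrtr_gt0; lra.
have r2 : r ^+ 2 = x + 1 by rewrite sqr_sqrtr //; lra.
set Q := (x + 1 + y - 2) / ((x + 1) * y).
have Q0 : 0 <= Q by apply: divr_ge0; [lra | apply: mulr_ge0; lra].
set s := Num.sqrt Q.
have s0 : 0 <= s := sqrtr_ge0 Q.
have s2 : s ^+ 2 = Q by rewrite sqr_sqrtr.
have Qe : Q * ((x + 1) * y) = x + y - 1.
  rewrite /Q mulfVK; [lra| rewrite mulf_neq0 //; lra].
have sr : 1 <= s * r.
  have h : 1 <= (s * r) ^+ 2.
    rewrite exprMn s2 r2.
    have : y <= Q * (x + 1) * y by rewrite -mulrA Qe; lra.
    rewrite -{1}(mul1r y) ler_pM2r; last lra.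
    by rewrite mulrC.
  have : 0 <= s * r by apply: mulr_ge0 => //; lra.
  move: h; nra.
set c := cc x.
have c0 : 0 < c by rewrite /c /cc invr_gt0; apply: mulr_gt0 => //; lra.
have ce : c * (2 * x * r) = 1 by rewrite /c /cc mulVf //; apply: lt0r_neq0; apply: mulr_gt0 => //; lra.
set P := (x + y - 2) / (x * y).
have Pe : (P - Q) * (x * (x + 1) * y) = y - 2.
  rewrite /P /Q; field; apply/and3P; split; apply: lt0r_neq0; lra.
have key : P < (s + c) ^+ 2.
  have h1 : (P - Q) * (x * (x + 1)) <= 1.
    have : (P - Q) * (x * (x + 1)) * y <= y by rewrite -mulrA Pe; lra.
    rewrite -{2}(mul1r y) ler_pM2r //; lra.
  have h2 : 1 <= 2 * s * c * (x * (x + 1)).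
    have -> : 2 * s * c * (x * (x + 1)) = (s * r) * (c * (2 * x * r)).
      rewrite -r2; ring.
    by rewrite ce mulr1.
  have xx : 0 < x * (x + 1) by apply: mulr_gt0; lra.
  have h3 : P - Q <= 2 * s * c.
    rewrite -(ler_pM2r xx); lra.
  have : 0 < c * c by apply: mulr_gt0.
  rewrite sqrrD s2; lra.
rewrite ltrBlDl; apply: sqrt_lt_aux => //; lra.
Qed.

Lemma gain_ge (a b : R) : 2 <= a -> 2 <= b ->
  (2 * Num.sqrt a)^-1 + (2 * Num.sqrt b)^-1 <= F a b.
Proof.
move=> a2 b2.
set p := Num.sqrt a; set q := Num.sqrt b.
have p0 : 0 < p by rewrite sqrtr_gt0; lra.
have q0 : 0 < q by rewrite sqrtr_gt0; lra.
have p2 : p ^+ 2 = a by rewrite sqr_sqrtr //; lra.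
have q2 : q ^+ 2 = b by rewrite sqr_sqrtr //; lra.
have -> : (2 * p)^-1 + (2 * q)^-1 = Num.sqrt (((p + q) / (2 * p * q)) ^+ 2).
  rewrite sqrtr_sqr ger0_norm; last by apply: divr_ge0; [lra| apply: mulr_ge0; lra].
  field; apply/andP; split; apply: lt0r_neq0; lra.
rewrite /F ler_sqrt; last first.
  apply: divr_ge0; [lra| apply: mulr_ge0; lra].
have pq0 : 0 < p * q by apply: mulr_gt0.
have -> : ((p + q) / (2 * p * q)) ^+ 2 = (p + q) ^+ 2 / 4 / (a * b).
  rewrite -p2 -q2; field; apply/andP; split; apply: lt0r_neq0; lra.
rewrite ler_pM2r; last by rewrite invr_gt0; apply: mulr_gt0; lra.
rewrite ler_pdivrMr; last lra.
have : 2 * (p * q) <= a + b by rewrite -p2 -q2; have := sqr_ge0 (p - q); rewrite sqrrB; lra.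
rewrite sqrrD p2 q2; lra.
Qed.
End An.
Arguments F {R}. Arguments cc {R}. Arguments loss_lt {R}. Arguments gain_ge {R}. Arguments sqrt_lt_aux {R}.
Ltac simp := rewrite /= ?mulr0n ?mulr1n ?mul0r ?mulr0 ?mul1r ?mulr1 ?add0r ?addr0 ?subr0 ?sub0r ?oppr0.

Section Gr.
Variable R : realType.
Variable T : finType.

Definition tt (e : rel T) x y : R :=
  if e x y then F ((deg e x)%:R) ((deg e y)%:R) else 0.
Definition S2 (e : rel T) : R := \sum_x \sum_y tt e x y.

Lemma ABC_S2 e : ABC R e = 2^-1 * S2 e.
Proof. rewrite /ABC /S2 /tt; congr (_ * _); apply: eq_bigr => x _; by rewrite big_mkcond. Qed.

Lemma F_sym (p q : R) : F p q = F q p.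
Proof. by rewrite /F (addrC p) (mulrC p). Qed.

Definition addE (e : rel T) u v : rel T :=
  fun x y => e x y || ((x == u) && (y == v)) || ((x == v) && (y == u)).

Lemma deg_addE e u v x : u != v -> ~~ e u v -> symmetric e ->
  deg (addE e u v) x = (deg e x + (x == u) + (x == v))%N.
Proof.
move=> uv euv se; rewrite /deg /addE.
case: (eqVneq x u) => [->|xu].
  rewrite (negbTE uv) addn0 addn1.
  have -> : [set y | e u y || (true && (y == v)) || (false && (y == u))] = v |: [set y | e u y].
    by apply/setP => y; rewrite !inE /= orbF orbC.
  by rewrite cardsU1 inE (negbTE euv) add1n.
case: (eqVneq x v) => [->|xv].
  rewrite addn0 addn1.
  have -> : [set y | e v y || (false && (y == v)) || (true && (y == u))] = u |: [set y | e v y].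
    by apply/setP => y; rewrite !inE /= orbF orbC.
  by rewrite cardsU1 inE se (negbTE euv) add1n.
rewrite !addn0; apply: eq_card => y; by rewrite !inE /= orbF orbF.
Qed.

Lemma deg_pos (e : rel T) (x y : T) : e x y -> (0 < deg e x)%N.
Proof. by move=> exy; rewrite /deg; apply/card_gt0P; exists y; rewrite inE. Qed.

Lemma sum_ind (P : pred T) : \sum_y ((P y : nat)%:R : R) = (#|[set y | P y]|)%:R.
Proof.
rewrite -sum1dep_card natr_sum [RHS]big_mkcond /=; apply: eq_bigr => y _.
by case: (P y).
Qed.

Lemma sum_delta (u : T) (K : T -> R) : \sum_x ((x == u)%:R * K x) = K u.
Proof.
rewrite (bigD1 u) //= eqxx mul1r big1 ?addr0 // => x /negbTE ->.
by rewrite mul0r.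
Qed.

Lemma S2_add e u v : simple_graph e -> u != v -> ~~ e u v ->
  (0 < deg e u)%N -> (0 < deg e v)%N -> S2 e < S2 (addE e u v).
Proof.
move=> [se ie] uv euv du0 dv0.
have evu : ~~ e v u by rewrite se.
set e1 := addE e u v.
have d1 : forall x, ((deg e1 x)%:R : R) = (deg e x)%:R + (x == u)%:R + (x == v)%:R.
  by move=> x; rewrite deg_addE // !natrD.
set du : R := (deg e u)%:R. set dv : R := (deg e v)%:R.
have du1 : 1 <= du by rewrite /du ler1n.
have dv1 : 1 <= dv by rewrite /dv ler1n.
set Fab := F (du + 1) (dv + 1).
set cu := cc du. set cv := cc dv.
pose Au y := (y == v)%:R * (Fab / 2) - (e u y)%:R * cu.
pose Av y := (y == u)%:R * (Fab / 2) - (e v y)%:R * cv.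
pose h x y := (x == u)%:R * Au y + (y == u)%:R * Au x + (x == v)%:R * Av y + (y == v)%:R * Av x.
pose D x y := tt e1 x y - tt e x y.
have sumA : \sum_y Au y = Fab / 2 - du * cu.
  rewrite sumrB sum_delta -mulr_suml sum_ind; congr (_ - _ * _).
have sumB : \sum_y Av y = Fab / 2 - dv * cv.
  rewrite sumrB sum_delta -mulr_suml sum_ind; congr (_ - _ * _).
have sumh : \sum_x \sum_y h x y = 2 * (Fab - du * cu - dv * cv).
  rewrite /h.
  under eq_bigr => x _ do rewrite !big_split /= -!mulr_sumr sum_delta sum_delta.
  rewrite !big_split /= !sum_delta !sumrN -!mulr_suml !sum_ind -/(deg e u) -/(deg e v) -/du -/dv; lra.
have vu : v != u by rewrite eq_sym.
have dpos : forall y, e u y || e v y -> 1 <= ((deg e y)%:R : R).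
  move=> y /orP [] h0; rewrite ler1n.
    by apply: (deg_pos e y u); rewrite se.
  by apply: (deg_pos e y v); rewrite se.
have Hle : forall x y, h x y <= D x y.
  move=> x y; rewrite /h /Au /Av /D /tt /e1 /addE !d1 -/du -/dv.
  case: (eqVneq x u) => [->|xu]; [|case: (eqVneq x v) => [->|xv]];
  (case: (eqVneq y u) => [->|yu]; [|case: (eqVneq y v) => [->|yv]]).
  - by rewrite ?eqxx ?(negbTE uv) ?(ie u) /=; lra.
  - by rewrite ?eqxx ?(negbTE uv) ?(negbTE euv) ?(negbTE evu) /= !addr0 -/Fab; lra.
  - rewrite ?eqxx ?(negbTE uv) ?(negbTE yu) ?(negbTE yv) /= !addr0 orbF.
    case E: (e u y); simp; last by lra.
    have := loss_lt du ((deg e y)%:R) du1 (dpos y (introT orP (or_introl E))).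
    rewrite -/cu; lra.
  - by rewrite ?eqxx ?(negbTE uv) ?(negbTE vu) ?(negbTE euv) ?(negbTE evu) /= !addr0 F_sym -/Fab; lra.
  - by rewrite ?eqxx ?(negbTE vu) ?(ie v) /=; lra.
  - rewrite ?eqxx ?(negbTE vu) ?(negbTE yu) ?(negbTE yv) /= !addr0 orbF.
    case E: (e v y); simp; last by lra.
    have := loss_lt dv ((deg e y)%:R) dv1 (dpos y (introT orP (or_intror E))).
    rewrite -/cv; lra.
  - rewrite ?eqxx ?(negbTE xu) ?(negbTE xv) ?(negbTE uv) /= !addr0 !orbF (se x u).
    case E: (e u x); simp; last by lra.
    have := loss_lt du ((deg e x)%:R) du1 (dpos x (introT orP (or_introl E))).
    rewrite -/cu (F_sym _ (du + 1)) (F_sym _ du); lra.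
  - rewrite ?eqxx ?(negbTE xu) ?(negbTE xv) ?(negbTE vu) /= !addr0 !orbF (se x v).
    case E: (e v x); simp; last by lra.
    have := loss_lt dv ((deg e x)%:R) dv1 (dpos x (introT orP (or_intror E))).
    rewrite -/cv (F_sym _ (dv + 1)) (F_sym _ dv); lra.
  - by rewrite ?(negbTE xu) ?(negbTE xv) ?(negbTE yu) ?(negbTE yv) /= !addr0 !orbF; lra.
have [w0] : exists w0, e u w0 by move/card_gt0P: du0 => [w0]; rewrite inE; exists w0.
move=> ew0.
have w0u : w0 != u by apply: contraTneq ew0 => ->; rewrite ie.
have w0v : w0 != v by apply: contraTneq ew0 => ->.
have Hlt : h u w0 < D u w0.
  rewrite /h /Au /Av /D /tt /e1 /addE !d1 -/du -/dv eqxx (negbTE uv) (negbTE w0u) (negbTE w0v) ew0.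
  simp.
  have := loss_lt du ((deg e w0)%:R) du1 (dpos w0 (introT orP (or_introl ew0))).
  rewrite -/cu; lra.
have Hsum : \sum_x \sum_y h x y < \sum_x \sum_y D x y.
  rewrite (bigD1 u) //= [X in _ < X](bigD1 u) //=; apply: ltr_leD.
    rewrite (bigD1 w0) //= [X in _ < X](bigD1 w0) //=; apply: ltr_leD => //.
    by apply: ler_sum => y _.
  by apply: ler_sum => x _; apply: ler_sum => y _.
have Hg : 0 <= Fab - du * cu - dv * cv.
  have e1' : du * cu = (2 * Num.sqrt (du + 1))^-1.
    have squ : 0 < Num.sqrt (du + 1) by rewrite sqrtr_gt0; lra.
    rewrite /cu /cc; field; rewrite -/du; apply/andP; split; apply: lt0r_neq0 => //; lra.
  have e2' : dv * cv = (2 * Num.sqrt (dv + 1))^-1.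
    have sqv : 0 < Num.sqrt (dv + 1) by rewrite sqrtr_gt0; lra.
    rewrite /cv /cc; field; rewrite -/dv; apply/andP; split; apply: lt0r_neq0 => //; lra.
  have := gain_ge (du + 1) (dv + 1); rewrite -/Fab; lra.
rewrite -subr_gt0 /S2 -sumrB.
have -> : \sum_x (\sum_y tt e1 x y - \sum_y tt e x y) = \sum_x \sum_y D x y.
  by apply: eq_bigr => x _; rewrite sumrB.
rewrite sumh in Hsum; lra.
Qed.

Lemma S2_ext (e e' : rel T) : (forall x y, e x y = e' x y) -> S2 e = S2 e'.
Proof.
move=> h; have -> : e = e' by apply: functional_extensionality => x; apply: functional_extensionality => y.
by [].
Qed.

Definition miss (e e' : rel T) := [set p : T * T | e' p.1 p.2 && ~~ e p.1 p.2].

Lemma mono_aux n : forall e e' : rel T, (#|miss e e'| <= n)%N ->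
  simple_graph e -> simple_graph e' -> (forall x y, e x y -> e' x y) ->
  (forall x y, e' x y -> (0 < deg e x)%N) ->
  S2 e <= S2 e' /\ (S2 e = S2 e' -> forall x y, e x y = e' x y).
Proof.
elim: n => [|n IH] e e' hc [se ie] [se' ie'] sub dg.
- have heq : forall x y, e x y = e' x y.
    move=> x y; apply/idP/idP; first exact: sub.
    move=> h; apply/negPn/negP => ne.
    have : (x, y) \in miss e e' by rewrite inE /= h ne.
    by move: hc; rewrite leqn0 => /eqP/cards0_eq ->; rewrite inE.
  by rewrite (S2_ext _ _ heq); split.
- case: (posnP #|miss e e'|) => [c0|cpos].
    have heq : forall x y, e x y = e' x y.
      move=> x y; apply/idP/idP; first exact: sub.
      move=> h; apply/negPn/negP => ne.
      have : (x, y) \in miss e e' by rewrite inE /= h ne.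
      by move: c0 => /cards0_eq ->; rewrite inE.
    by rewrite (S2_ext _ _ heq); split.
  move/card_gt0P: cpos => [[u v]]; rewrite inE /= => /andP [e'uv neuv].
  have uv : u != v by apply: contraTneq e'uv => ->; rewrite ie'.
  set e1 := addE e u v.
  have se1 : symmetric e1.
    move=> x y; rewrite /e1 /addE se; case: (x == u); case: (x == v); case: (y == u); case: (y == v) => //=; by rewrite ?orbT ?orbF.
  have ie1 : irreflexive e1.
    move=> x; rewrite /e1 /addE ie /=; case: (eqVneq x u) => [->|]; first by rewrite (negbTE uv).
    by rewrite andbF.
  have sub1 : forall x y, e1 x y -> e' x y.
    move=> x y; rewrite /e1 /addE => /orP [/orP [/sub //|/andP [/eqP -> /eqP ->] //]|/andP [/eqP -> /eqP ->]].
    by rewrite se'.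
  have dg1 : forall x y, e' x y -> (0 < deg e1 x)%N.
    move=> x y /dg h; rewrite /e1 deg_addE //; first by rewrite -addnA ltn_addr.
  have hc1 : (#|miss e1 e'| <= n)%N.
    have s1 : miss e1 e' \subset miss e e' :\ (u, v).
      apply/subsetP => [[x y]]; rewrite !inE /= /e1 /addE => /andP [-> ].
      rewrite !negb_or => /andP [/andP [-> h2] _]; rewrite andbT /= andbT.
      apply: contra h2 => /eqP [-> ->]; by rewrite !eqxx.
    move: hc; rewrite (cardsD1 (u, v) (miss e e')) inE /= e'uv neuv add1n ltnS => hc.
    exact: leq_trans (subset_leq_card s1) hc.
  have [IH1 _] := IH e1 e' hc1 (conj se1 ie1) (conj se' ie') sub1 dg1.
  have e'vu : e' v u by rewrite se'.
  have lt := S2_add _ _ _ (conj se ie) uv neuv (dg _ _ e'uv) (dg _ _ e'vu).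
  split; first by apply: ltW; apply: lt_le_trans IH1.
  by move=> eqS; move: (lt_le_trans lt IH1); rewrite eqS ltxx.
Qed.
End Gr.
Arguments S2_add {R T}. Arguments tt {R T}. Arguments S2 {R T}. Arguments ABC_S2 {R T}. Arguments F_sym {R}. Arguments sum_ind {R T}. Arguments sum_delta {R T}. Arguments deg_pos {T}. Arguments mono_aux {R T}. Arguments S2_ext {R T}. Arguments miss {T}.
Section J.
Variable R : realType.

Definition J (T : finType) (P : pred T) : rel T := fun x y => (x != y) && ~~ (P x && P y).
Arguments J {T}.

Lemma sum_if_const (T : finType) (Q : pred T) (c : R) :
  \sum_y (if Q y then c else 0) = (#|[set y | Q y]|)%:R * c.
Proof.
rewrite -sum_ind mulr_suml; apply: eq_bigr => y _; by case: (Q y); simp.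
Qed.

Lemma ABC_J (T : finType) (P : pred T) : (0 < #|T|)%N ->
  let n : R := #|T|%:R in let b : R := #|[set x | P x]|%:R in
  ABC R (J P) = b * (n - b) * Num.sqrt ((2 * n - b - 3) / ((n - b) * (n - 1)))
    + (n - b) * (n - b - 1) / 2 * Num.sqrt ((2 * n - 4) / ((n - 1) * (n - 1))).
Proof.
move=> n0 n b.
set bb := #|[set x | P x]|. set k := #|[set x | ~~ P x]|. set m := #|T|.-1.
have hk : (bb + k)%N = #|T|.
  rewrite -(cardsC [set x | P x]); congr (_ + _)%N; apply: eq_card => x; by rewrite !inE.
have dJ : forall x, deg (J P) x = if P x then k else m.
  move=> x; rewrite /deg /J; case Px: (P x).
    apply: eq_card => y; rewrite !inE /=; case Py: (P y); rewrite ?andbF //= andbT.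
    by apply/eqP => exy; rewrite exy Py in Px.
  rewrite /m -(cardsC1 x); apply: eq_card => y; by rewrite !inE /= andbT eq_sym.
set km : R := k%:R. set mm : R := m%:R.
have row : forall x, \sum_y tt (R:=R) (J P) x y =
   if P x then km * F km mm else bb%:R * F mm km + (k.-1)%:R * F mm mm.
  move=> x; rewrite /tt dJ; case Px: (P x).
    rewrite -/km -/mm.
    have -> : \sum_y (if J P x y then F km (deg (J P) y)%:R else 0) =
              \sum_y (if ~~ P y then F km mm else 0).
      apply: eq_bigr => y _; rewrite /J Px dJ /=; case Py: (P y); rewrite ?andbF //= andbT.
      have -> : x != y by apply/eqP => exy; rewrite exy Py in Px.
      by [].
    by rewrite sum_if_const.
  rewrite -/mm.
  have -> : \sum_y (if J P x y then F mm (deg (J P) y)%:R else 0) =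
       \sum_y ((if (x != y) && P y then F mm km else 0) +
               (if (x != y) && ~~ P y then F mm mm else 0)).
    apply: eq_bigr => y _; rewrite /J Px dJ /=; case Py: (P y); case: (x != y); by simp.
  rewrite big_split /= !sum_if_const; congr (_ * _ + _ * _).
    congr (_ %:R); apply: eq_card => y; rewrite !inE; case Py: (P y); rewrite ?andbF ?andbT //.
    by apply/eqP => exy; rewrite exy Py in Px.
  congr (_ %:R).
  rewrite /k (cardsD1 x [set x0 | ~~ P x0]) inE Px /= add0n.
  apply: eq_card => y; rewrite !inE eq_sym; by [].
have S2J : S2 (R:=R) (J P) = bb%:R * (km * F km mm) + km * (bb%:R * F mm km + (k.-1)%:R * F mm mm).
  rewrite /S2; under eq_bigr => x _ do rewrite row.
  have -> : \sum_x (if P x then km * F km mm else bb%:R * F mm km + (k.-1)%:R * F mm mm)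
     = \sum_x ((if P x then km * F km mm else 0) + (if ~~ P x then bb%:R * F mm km + (k.-1)%:R * F mm mm else 0)).
    apply: eq_bigr => x _; case: (P x); by simp.
  by rewrite big_split /= !sum_if_const.
have kmE : km = n - b by rewrite /km /n /b -hk natrD; ring.
have mmE : mm = n - 1 by rewrite /mm /n /m -(prednK n0) /= -natr1 /=; ring.
have kk : km * (k.-1)%:R = km * (km - 1).
  rewrite /km; case: (k) => [|k']; simp => //.
  by rewrite /= -natr1; ring.
rewrite ABC_S2 S2J (F_sym mm km).
have F1 : F km mm = Num.sqrt ((2 * n - b - 3) / ((n - b) * (n - 1))).
  rewrite /F kmE mmE; congr (Num.sqrt (_ / _)); ring.
have F2 : F mm mm = Num.sqrt ((2 * n - 4) / ((n - 1) * (n - 1))).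
  rewrite /F mmE; congr (Num.sqrt (_ / _)); ring.
rewrite F1 F2 -/b.
set X := Num.sqrt _. set Y := Num.sqrt _.
have -> : km * (b * X + (k.-1)%:R * Y) = km * b * X + (km * (k.-1)%:R) * Y by ring.
rewrite kk kmE; by field.
Qed.

Lemma ABC_iso (T1 T2 : finType) (e1 : rel T1) (e2 : rel T2) (f : T1 -> T2) :
  bijective f -> (forall x y, e2 (f x) (f y) = e1 x y) -> ABC R e1 = ABC R e2.
Proof.
move=> bf he.
have injf := bij_inj bf.
have dg : forall x, deg e2 (f x) = deg e1 x.
  move=> x; rewrite /deg -(card_imset _ injf); apply: eq_card => z.
  case: bf => g fg gf.
  rewrite inE; apply/idP/imsetP.
    by move=> h; exists (g z); rewrite ?inE -?he gf.
  by move=> [y]; rewrite inE => h ->; rewrite he.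
rewrite /ABC; congr (_ * _).
rewrite (reindex f (onW_bij _ bf)) /=; apply: eq_bigr => x _.
rewrite (reindex f (onW_bij _ bf)) /=.
apply: eq_big => [y|y _]; by rewrite ?he ?dg.
Qed.
End J.
Arguments J {T}.
Theorem theorem2p2 (R : realType) (T : finType) (e : rel T) :
  simple_graph e -> connected_graph e -> (0 < #|T|)%N ->
  let n : R := (#|T|)%:R in
  let b : R := (indep_num e)%:R in
  let bound : R :=
    b * (n - b) * Num.sqrt ((2 * n - b - 3) / ((n - b) * (n - 1)))
    + (n - b) * (n - b - 1) / 2 * Num.sqrt ((2 * n - 4) / ((n - 1) * (n - 1))) in
  ABC R e <= bound /\
  (ABC R e = bound <->
   graph_iso e (join_empty_complete #|T| (indep_num e))).
Proof.
move=> [se ie] conn n0 n b bound.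
have [S indS cardS] : exists2 S : {set T}, independent e S & #|S| = indep_num e.
  have h0 : (0 < #|[pred S : {set T} | independent e S]|)%N.
    apply/card_gt0P; exists set0; rewrite inE /independent.
    by apply/forall_inP => x; rewrite inE.
  have [S0 HS0 eqS] := eq_bigmax_cond (fun S : {set T} => #|S|) h0.
  exists S0; first by move: HS0; rewrite inE.
  by rewrite /indep_num -eqS; apply: eq_bigl => S; rewrite inE.
pose P := fun x => x \in S.
pose e' := J P.
have cP : #|[set x | P x]| = indep_num e by rewrite -cardS; apply: eq_card => x; rewrite inE.
have hABC' : ABC R e' = bound.
  by have := @ABC_J R _ P n0; rewrite /= cP => ->.
have sub : forall x y, e x y -> e' x y.
  move=> x y h; rewrite /e' /J; apply/andP; split.
    by apply/eqP => exy; rewrite exy ie in h.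
  apply/andP => [[xs ys]].
  by move/forall_inP: indS => /(_ x xs) /forall_inP /(_ y ys); rewrite h.
have simple' : simple_graph e'.
  split; first by move=> x y; rewrite /e' /J eq_sym [P y && _]andbC.
  by move=> x; rewrite /e' /J eqxx.
have dg : forall x y, e' x y -> (0 < deg e x)%N.
  move=> x y /andP [xy _]; have := conn x y; move/connectP => [p pth lst].
  case: p pth lst => [|z p] /=.
    by move=> _ exy; rewrite -exy eqxx in xy.
  by move=> /andP [exz _] _; exact: (deg_pos e x z exz).
have [mle meq] := mono_aux (R:=R) #|miss e e'| e e' (leqnn _) (conj se ie) simple' sub dg.
set s := enum S ++ enum (~: S).
have sz : size s = #|T| by rewrite size_cat -!cardE cardsC.
have ins : forall x, x \in s by move=> x; rewrite mem_cat !mem_enum inE; case: (x \in S).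
have ltx : forall x, (index x s < #|T|)%N by move=> x; rewrite -sz index_mem.
pose f x := Ordinal (ltx x) : 'I_#|T|.
have injf : injective f.
  move=> x y /(congr1 val) /= h; by rewrite -(nth_index x (ins x)) h nth_index.
have bf : bijective f by apply: inj_card_bij injf _; rewrite card_ord.
have fS : forall x, ((f x : nat) < indep_num e)%N = (x \in S).
  move=> x; rewrite /= index_cat mem_enum -cardS cardE; case: ifP => xS.
    by rewrite index_mem mem_enum xS.
  by rewrite ltnNge leq_addr.
have i2 : (0 <= 2^-1 :> R) by rewrite invr_ge0 ler0n.
split.
  rewrite -hABC' !ABC_S2; exact: ler_wpM2l.
split.
  rewrite -hABC' !ABC_S2 => h.
  have nz : (2^-1 : R) != 0 by rewrite invr_eq0 pnatr_eq0.
  have h2 := mulfI nz h.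
  have heq := meq h2.
  exists f; split => // x y.
  by rewrite heq /e' /J /join_empty_complete (inj_eq injf) !fS.
move=> [g [bg hg]].
rewrite (@ABC_iso R _ _ _ _ _ bg hg).
have ci : #|[set i : 'I_#|T| | ((i : nat) < indep_num e)%N]| = indep_num e.
  have <- : f @: S = [set i : 'I_#|T| | ((i : nat) < indep_num e)%N].
    apply/setP => i; rewrite inE; apply/imsetP/idP.
      by move=> [x xS ->]; rewrite fS.
    move=> h; case: bf => k fk kf; exists (k i); last by rewrite kf.
    by rewrite -fS kf.
  by rewrite card_imset.
have n0' : (0 < #|'I_#|T| |)%N by rewrite card_ord.
have := @ABC_J R _ (fun i : 'I_#|T| => ((i : nat) < indep_num e)%N) n0'.
rewrite /= ci card_ord => ->.
by [].
Qed.
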